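(* Let $f$ be a harmonic function on $K$ with $f(p_0)=\alpha$, $f(p_1)=\beta$, $f(p_2)=\gamma$, and let $g$ be its restriction to $[p_1,p_2]\cong[0,1]$. If $2\beta=\alpha+\gamma$, then the (right) derivative of $g$ at $0$ (i.e. at $p_1$) is $0$; otherwise it is infinite ($+\infty$ or $-\infty$). Similarly, if $2\gamma=\alpha+\beta$, then the (left) derivative of $g$ at $1$ (i.e. at $p_2$) is $0$; otherwise it is infinite.
   Context: Let $p_0,p_1,p_2$ be the vertices of a unit equilateral triangle in $\mathbb{R}^2$, $F_i(x)=(x+p_i)/2$, and $K$ the Sierpinski gasket (the attractor of $F_0,F_1,F_2$). Minimal triangles of the graph $G_m$ are the triangles with vertices $F_w(p_0),F_w(p_1),F_w(p_2)$ for words $w$ of length $m$. A continuous $f:K\to\mathbb{R}$ is harmonic if for every $m\ge0$ and every minimal triangle of $G_m$ with vertices $v_i,v_j,v_k$, the value at the midpoint $v_{ij}$ of $[v_i,v_j]$ is $\frac15(2f(v_i)+2f(v_j)+f(v_k))$; such $f$ is uniquely determined by its values at $p_0,p_1,p_2$. The edge $[p_1,p_2]$ is identified with $[0,1]$ via $t\mapsto p_1+t(p_2-p_1)$. *)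

(* Defs.v *)
From HB Require Import structures.
From mathcomp Require Import all_boot all_order all_algebra.
From mathcomp Require Import all_classical all_reals all_analysis.
Set Implicit Arguments. Unset Strict Implicit. Unset Printing Implicit Defensive.
Import Order.TTheory GRing.Theory Num.Theory.
Import numFieldNormedType.Exports.
Local Open Scope classical_set_scope.
Local Open Scope ring_scope.

Section Gasket.
Variable R : realType.
Notation pt := (R * R)%type.

Definition vtx (p0 p1 p2 : pt) (i : 'I_3) : pt :=
  if val i == 0%N then p0 else if val i == 1%N then p1 else p2.

Definition dist2 (x y : pt) : R := (x.1 - y.1) ^+ 2 + (x.2 - y.2) ^+ 2.

Definition unit_equilateral (p0 p1 p2 : pt) : Prop :=
  dist2 p0 p1 = 1 /\ dist2 p1 p2 = 1 /\ dist2 p0 p2 = 1.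

Definition Fmap (p0 p1 p2 : pt) (i : 'I_3) (x : pt) : pt :=
  ((x.1 + (vtx p0 p1 p2 i).1) / 2, (x.2 + (vtx p0 p1 p2 i).2) / 2).

Definition Fword (p0 p1 p2 : pt) (w : seq 'I_3) (x : pt) : pt :=
  foldr (Fmap p0 p1 p2) x w.

(* K is the attractor of the IFS {F_0,F_1,F_2}: the (unique, by Hutchinson)
   nonempty compact set with K = F_0(K) u F_1(K) u F_2(K). *)
Definition is_attractor (p0 p1 p2 : pt) (K : set pt) : Prop :=
  compact K /\ K !=set0 /\ K = \bigcup_(i in [set: 'I_3]) (Fmap p0 p1 p2 i @` K).

Definition midpt (x y : pt) : pt := ((x.1 + y.1) / 2, (x.2 + y.2) / 2).

(* harmonic functions on K (values outside K are irrelevant) *)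
Definition sg_harmonic (p0 p1 p2 : pt) (K : set pt) (f : pt -> R) : Prop :=
  {within K, continuous f} /\
  forall (m : nat) (w : seq 'I_3), size w = m ->
  forall i j k : 'I_3, i != j -> j != k -> i != k ->
    f (midpt (Fword p0 p1 p2 w (vtx p0 p1 p2 i)) (Fword p0 p1 p2 w (vtx p0 p1 p2 j)))
    = (2 * f (Fword p0 p1 p2 w (vtx p0 p1 p2 i))
       + 2 * f (Fword p0 p1 p2 w (vtx p0 p1 p2 j))
       + f (Fword p0 p1 p2 w (vtx p0 p1 p2 k))) / 5.

(* identification of [p1,p2] with [0,1] : t |-> p1 + t (p2 - p1) *)
Definition edge12 (p1 p2 : pt) (t : R) : pt :=
  (p1.1 + t * (p2.1 - p1.1), p1.2 + t * (p2.2 - p1.2)).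

End Gasket.

(* Main.v *)
Require Import Defs.
From HB Require Import structures.
From mathcomp Require Import all_boot all_order all_algebra.
From mathcomp Require Import all_classical all_reals all_analysis.
From mathcomp Require Import ring lra zify.
From Stdlib Require Import Lia.
Import Order.TTheory GRing.Theory Num.Theory.
Import numFieldNormedType.Exports.
Local Open Scope classical_set_scope.
Local Open Scope ring_scope.
Lemma cont_eps (R : realType) (K : set (R*R)) (f : R*R -> R) x :
  {within K, continuous f} -> K x -> forall e, 0 < e -> exists2 d, 0 < d &
  forall y, K y -> `|x.1 - y.1| < d -> `|x.2 - y.2| < d -> `|f x - f y| < e.
Proof.
move=> /subspace_continuousP fc Kx e e0.
have := fc x Kx. move/cvgrPdist_lt => /(_ e e0).
rewrite /within /= => /nbhs_ballP[d d0 H].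
exists d => // y Ky h1 h2. apply: H => //.
Qed.

Lemma closed_eps (R : realType) (K : set (R*R)) x : closed K ->
  (forall e, 0 < e -> exists y, K y /\ `|x.1 - y.1| < e /\ `|x.2 - y.2| < e) -> K x.
Proof.
move=> cK H; apply: cK => B /nbhs_ballP[e e0 He].
have [y [Ky [h1 h2]]] := H e e0.
exists y; split => //; apply: He; split => /=; rewrite -ball_normE /ball /=; by [].
Qed.

Section Gen.
Variable R : realType.
Lemma pow2_ge n : (n.+1%:R : R) <= 2 ^+ n.
Proof.
elim: n => [|n IH]; first by rewrite expr0.
rewrite exprS -natr1 -[n.+1%:R]natr1.
have : (1 : R) <= 2 ^+ n by rewrite exprn_ege1 // ler1n.
lra.
Qed.

Lemma small_h (C e : R) : 0 < e -> exists n, C / 2 ^+ n < e.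
Proof.
move=> e0; exists (Num.truncn (`|C| / e)).
set n := Num.truncn _.
have h1 := truncnS_gt (`|C| / e); rewrite -/n in h1.
have h2 := pow2_ge n.
have hp : (0 : R) < 2 ^+ n by rewrite exprn_gt0.
rewrite ltr_pdivrMr // in h1.
rewrite ltr_pdivrMr //.
have hC : C <= `|C| by apply: ler_norm.
have : (0 : R) <= `|C| by [].
nra.
Qed.

End Gen.

Section Arith.
Variable R : realType.

Lemma hinv_eq (n : nat) : ((2 : R) ^+ n)^-1 = (2^-1) ^+ n.
Proof. by rewrite exprVn. Qed.

Lemma h_mono (N n : nat) : (N <= n)%N -> ((2 : R) ^+ n)^-1 <= (2 ^+ N)^-1.
Proof.
move=> h; rewrite !hinv_eq; apply: ler_wiXn2l => //;
  rewrite ?invr_ge0 ?ler0n ?invf_le1 ?ler1n ?ltr0n //.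
Qed.

Lemma h_pos (n : nat) : (0 : R) < (2 ^+ n)^-1.
Proof. by rewrite invr_gt0 exprn_gt0. Qed.

Lemma h_S (n : nat) : ((2 : R) ^+ n)^-1 = 2 * (2 ^+ n.+1)^-1.
Proof. rewrite exprS invfM; field. by rewrite expf_neq0. Qed.

Lemma pick_n (t : R) : 0 < t <= 1 -> exists n, (2 ^+ n.+1)^-1 < t <= (2 ^+ n)^-1.
Proof.
move=> /andP[t0 t1]; have [N hN] := @small_h R 1 t t0.
rewrite div1r in hN.
elim: N hN => [|N IH] hN.
  by move: hN; rewrite expr0 invr1; lra.
case: (lerP t (2 ^+ N)^-1) => h.
  by exists N; apply/andP.
exact: IH.
Qed.

Lemma bern (n : nat) : 1 + n%:R / 5 <= (6 / 5 : R) ^+ n.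
Proof.
elim: n => [|n IH]; first by rewrite expr0 mul0r addr0.
rewrite exprS -natr1.
have : (0 : R) <= n%:R by [].
nra.
Qed.

Lemma corner_zero (X : R -> R) (c : R) : 0 <= c ->
  (forall n t, (2 ^+ n.+1)^-1 < t <= (2 ^+ n)^-1 -> `|X t| <= c * (1 / 5) ^+ n) ->
  forall t, 0 < t <= 1 -> `|X t| <= 4 * c * t ^+ 2.
Proof.
move=> c0 H t ht; have [n hn] := pick_n t ht.
apply: le_trans (H n t hn) _.
have q1 : (1 / 5 : R) ^+ n <= ((2 ^+ n)^-1) ^+ 2.
  rewrite hinv_eq -exprM mulnC exprM.
  apply: lerXn2r; rewrite ?nnegrE //.
  have -> : (2:R)^-1 ^+ 2 = 1/4 by rewrite expr2; field.
  lra.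
have q2 : (2 ^+ n)^-1 <= 2 * t.
  move: hn => /andP[h1 _]; rewrite h_S; lra.
have q3 := h_pos n.
have q4 : ((2 ^+ n)^-1) ^+ 2 <= 4 * t ^+ 2.
  rewrite !expr2; nra.
have := ler_wpM2l c0 (le_trans q1 q4); lra.
Qed.

Lemma corner_inf (X : R -> R) (S D : R) : 0 < S ->
  (forall n t, (2 ^+ n.+1)^-1 < t <= (2 ^+ n)^-1 ->
     1 / 10 * S * (3 / 5) ^+ n - `|D| * (1 / 5) ^+ n <= X t) ->
  forall M, exists2 d, 0 < d & forall t, 0 < t < d -> M * t < X t.
Proof.
move=> S0 H M.
set C := 51 * (`|M| + `|D|) / S.
set N := (Num.truncn C).+1.
have hN : C < N%:R by apply: truncnS_gt.
exists ((2 ^+ N)^-1); first exact: h_pos.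
move=> t /andP[t0 td].
have t1 : t <= 1.
  apply: ltW; apply: lt_le_trans td _; rewrite invf_le1 ?exprn_gt0 //.
  by rewrite exprn_ege1 // ler1n.
have [n /andP[hn1 hn2]] := pick_n t (ltac:(apply/andP; split => //)).
have nN : (N <= n)%N.
  rewrite leqNgt; apply/negP => hlt.
  have := h_mono _ _ hlt; lra.
have hnr : C < n%:R by apply: lt_le_trans hN _; rewrite ler_nat.
have L := H n t (ltac:(apply/andP; split => //)).
have r1 : (3 / 5 : R) ^+ n = (6 / 5) ^+ n * (2 ^+ n)^-1.
  by rewrite hinv_eq -exprMn; congr (_ ^+ _); field.
have r2 : (1 / 5 : R) ^+ n = (2 / 5) ^+ n * (2 ^+ n)^-1.
  by rewrite hinv_eq -exprMn; congr (_ ^+ _); field.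
rewrite r1 r2 in L.
have b1 := bern n.
have b2 : (2 / 5 : R) ^+ n <= 1 by apply: exprn_ile1; lra.
have b3 : (0 : R) <= (2 / 5) ^+ n by apply: exprn_ge0; lra.
have hp := h_pos n.
have hC : C * S = 51 * (`|M| + `|D|) by rewrite /C; field; rewrite gt_eqF.
have nD := normr_ge0 D; have nM := normr_ge0 M.
have Mle : M * t <= `|M| * t by apply: ler_wpM2r; [lra| apply: ler_norm].
set h := (2 ^+ n)^-1 in hn2 L hp r1 r2.
set p := (6 / 5 : R) ^+ n in L b1.
set q := (2 / 5 : R) ^+ n in L b2 b3.
have Z : `|M| < 1 / 10 * S * p - `|D| * q.
  have : 1 / 10 * S * (1 + n%:R / 5) <= 1 / 10 * S * p.
    by apply: ler_wpM2l => //; lra.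
  have : `|D| * q <= `|D| by nra.
  nra.
have : `|M| * h < (1 / 10 * S * p - `|D| * q) * h by rewrite ltr_pM2r.
have : `|M| * t <= `|M| * h by apply: ler_wpM2l.
nra.
Qed.
End Arith.

Section Filt.
Variable R : realType.

Lemma nearR (P : R -> Prop) (d : R) : 0 < d -> (forall t, 0 < t < d -> P t) ->
  \forall t \near 0^'+, P t.
Proof.
move=> d0 H; near=> t; apply: H; apply/andP; split.
  by near: t; exact: nbhs_right_gt.
by near: t; exact: nbhs_right_lt.
Unshelve. all: by end_near.
Qed.

Lemma nearL (P : R -> Prop) (d : R) : 0 < d -> (forall s, 0 < s < d -> P (1 - s)) ->
  \forall t \near 1^'-, P t.
Proof.
move=> d0 H; near=> t.
have -> : t = 1 - (1 - t) by ring.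
apply: H; apply/andP; split.
  rewrite subr_gt0; by near: t; exact: nbhs_left_lt.
rewrite ltrBlDr -ltrBlDl; near: t; apply: nbhs_left_gt; lra.
Unshelve. all: by end_near.
Qed.

Lemma F0 (X : R -> R) (C : R) : (forall t, 0 < t <= 1 -> `|X t| <= C * t ^+ 2) ->
  (fun t => X t / t) @ 0^'+ --> 0.
Proof.
move=> H; apply/cvgr0Pnorm_lt => e e0.
have C1 : 0 < `|C| + 1 by have := normr_ge0 C; lra.
have d0 : 0 < Num.min 1 (e / (`|C| + 1)).
  by rewrite lt_min ltr01 divr_gt0.
apply: (@nearR (fun t => `|X t / t| < e) _ d0) => t /andP[t0]; rewrite lt_min => /andP[t1 t2].
have := H t (ltac:(apply/andP; split => //; exact: ltW)).
rewrite normrM normrV ?unitfE ?gt_eqF // (gtr0_norm t0) => h.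
rewrite ltr_pdivrMr //.
have hC : C <= `|C| by apply: ler_norm.
rewrite ltr_pdivlMr // in t2.
have := normr_ge0 (X t).
rewrite expr2 in h.
nra.
Qed.

Lemma Fp (X : R -> R) : (forall M, exists2 d, 0 < d & forall t, 0 < t < d -> M * t < X t) ->
  (fun t => X t / t) @ 0^'+ --> +oo.
Proof.
move=> H; apply/cvgryPgt => A.
have [d d0 Hd] := H A.
apply: (@nearR (fun t => A < X t / t) _ d0) => t ht; move: (ht) => /andP[t0 _].
by rewrite ltr_pdivlMr //; apply: Hd.
Qed.

Lemma Fn (X : R -> R) : (forall M, exists2 d, 0 < d & forall t, 0 < t < d -> M * t < - X t) ->
  (fun t => X t / t) @ 0^'+ --> -oo.
Proof.
move=> H; apply/cvgrNyPlt => A.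
have [d d0 Hd] := H (- A).
apply: (@nearR (fun t => A > X t / t) _ d0) => t ht; move: (ht) => /andP[t0 _].
rewrite ltr_pdivrMr //; have := Hd t ht; lra.
Qed.

Lemma G0 (X : R -> R) (C : R) : (forall t, 0 < t <= 1 -> `|X t| <= C * t ^+ 2) ->
  (fun t => X (1 - t) / (t - 1)) @ 1^'- --> 0.
Proof.
move=> H; apply/cvgr0Pnorm_lt => e e0.
have C1 : 0 < `|C| + 1 by have := normr_ge0 C; lra.
have d0 : 0 < Num.min 1 (e / (`|C| + 1)).
  by rewrite lt_min ltr01 divr_gt0.
apply: (@nearL (fun t => `|X (1 - t) / (t - 1)| < e) _ d0) => t /andP[t0].
rewrite lt_min => /andP[t1 t2].
have -> : 1 - t - 1 = - t by ring.
rewrite opprB addrC subrK.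
have := H t (ltac:(apply/andP; split => //; exact: ltW)).
rewrite normrM normrV ?unitfE ?oppr_eq0 ?gt_eqF // normrN (gtr0_norm t0) => h.
rewrite ltr_pdivrMr //.
have hC : C <= `|C| by apply: ler_norm.
rewrite ltr_pdivlMr // in t2.
have := normr_ge0 (X t).
rewrite expr2 in h.
nra.
Qed.

Lemma Gp (X : R -> R) : (forall M, exists2 d, 0 < d & forall t, 0 < t < d -> M * t < X t) ->
  (fun t => X (1 - t) / (t - 1)) @ 1^'- --> -oo.
Proof.
move=> H; apply/cvgrNyPlt => A.
have [d d0 Hd] := H (- A).
apply: (@nearL (fun t => A > X (1 - t) / (t - 1)) _ d0) => t ht; move: (ht) => /andP[t0 _].
have -> : 1 - t - 1 = - t by ring.
rewrite opprB addrC subrK.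
rewrite invrN mulrN ltrNl ltr_pdivlMr //; have := Hd t ht; lra.
Qed.

Lemma Gn (X : R -> R) : (forall M, exists2 d, 0 < d & forall t, 0 < t < d -> M * t < - X t) ->
  (fun t => X (1 - t) / (t - 1)) @ 1^'- --> +oo.
Proof.
move=> H; apply/cvgryPgt => A.
have [d d0 Hd] := H A.
apply: (@nearL (fun t => A < X (1 - t) / (t - 1)) _ d0) => t ht; move: (ht) => /andP[t0 _].
have -> : 1 - t - 1 = - t by ring.
rewrite opprB addrC subrK.
rewrite invrN mulrN ltrNr ltr_pdivrMr //; have := Hd t ht; lra.
Qed.
End Filt.

Section Core.
Variable R : realType.
Variables p0 p1 p2 : R * R.
Variable f : R * R -> R.
Local Notation P := (vtx p0 p1 p2).
Local Notation FW := (Fword p0 p1 p2).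
Local Notation FM := (Fmap p0 p1 p2).

Lemma FW_rcons w l x : FW (rcons w l) x = FW w (FM l x).
Proof. by rewrite /Fword foldr_rcons. Qed.

Lemma FM_mid l a b : FM l (midpt a b) = midpt (FM l a) (FM l b).
Proof. by rewrite /Fmap /midpt /=; congr pair; field. Qed.

Lemma FW_mid w a b : FW w (midpt a b) = midpt (FW w a) (FW w b).
Proof. elim: w => //= l w IH; by rewrite IH FM_mid. Qed.

Lemma midpt_id (y : R * R) : midpt y y = y.
Proof. case: y => a b; rewrite /midpt /=; by congr pair; field. Qed.

Hypothesis Hh : forall w u v x, u != v -> v != x -> u != x ->
  f (midpt (FW w (P u)) (FW w (P v))) =
  (2 * f (FW w (P u)) + 2 * f (FW w (P v)) + f (FW w (P x))) / 5.

Definition vl w u := f (FW w (P u)).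

Lemma step w l u x : u != l -> l != x -> u != x ->
  vl (rcons w l) u = (2 * vl w u + 2 * vl w l + vl w x) / 5.
Proof.
move=> h1 h2 h3; rewrite /vl FW_rcons.
have -> : FM l (P u) = midpt (P u) (P l) by [].
by rewrite FW_mid (Hh _ _ _ _ h1 h2 h3).
Qed.

Lemma step_same w l : vl (rcons w l) l = vl w l.
Proof.
rewrite /vl FW_rcons.
have -> : FM l (P l) = midpt (P l) (P l) by [].
by rewrite midpt_id.
Qed.

Variables i j o : 'I_3.
Hypotheses (hij : i != j) (hjo : j != o) (hio : i != o).

Definition E (s : R) : R * R :=
  ((P i).1 + s * ((P j).1 - (P i).1), (P i).2 + s * ((P j).2 - (P i).2)).

Lemma E_half s : FM i (E s) = E (s / 2).
Proof. by rewrite /Fmap /E /=; congr pair; field. Qed.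
Lemma E_half2 s : FM j (E s) = E ((1 + s) / 2).
Proof. by rewrite /Fmap /E /=; congr pair; field. Qed.
Lemma E0 : E 0 = P i.
Proof. rewrite /E; case: (P i) => a b /=; by rewrite !mul0r !addr0. Qed.
Lemma E1 : E 1 = P j.
Proof. rewrite /E; case: (P i) (P j) => a b [c d] /=; congr pair; ring. Qed.

Lemma dy_split n k : (k <= 2 ^ n.+1)%N ->
  ((k <= 2 ^ n)%N /\ (k%:R / 2 ^+ n.+1 : R) = (k%:R / 2 ^+ n) / 2) \/
  (exists k', (k' <= 2 ^ n)%N /\ (k%:R / 2 ^+ n.+1 : R) = (1 + k'%:R / 2 ^+ n) / 2).
Proof.
move=> hk.
have h2 : (2 : R) ^+ n != 0 by rewrite expf_neq0.
case: (leqP k (2 ^ n)) => h.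
  left; split => //; rewrite exprS; field; by rewrite h2.
right; exists (k - 2 ^ n)%N; split.
  by move: hk; rewrite expnS; lia.
rewrite natrB; last by apply: ltnW.
rewrite natrX exprS; field; by rewrite h2.
Qed.

Lemma maxp_dy n : forall k w lo hi, (k <= 2 ^ n)%N ->
  lo <= vl w i <= hi -> lo <= vl w j <= hi -> lo <= vl w o <= hi ->
  lo <= f (FW w (E (k%:R / 2 ^+ n))) <= hi.
Proof.
have hji : j != i by rewrite eq_sym.
have hoj : o != j by rewrite eq_sym.
have hoi : o != i by rewrite eq_sym.
elim: n => [|n IH] k w lo hi hk /andP[hi1 hi2] /andP[hj1 hj2] /andP[ho1 ho2].
  move: hk; rewrite expn0 expr0 divr1; case: k => [|[|//]] _.
    by rewrite E0; apply/andP.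
  by rewrite E1; apply/andP.
case: (dy_split _ _ hk) => [[hk' ->]|[k' [hk' ->]]].
  rewrite -E_half -FW_rcons; apply: IH => //.
  - by rewrite step_same; apply/andP.
  - rewrite (step w i j o) //; apply/andP; split; lra.
  - rewrite (step w i o j) //; apply/andP; split; lra.
rewrite -E_half2 -FW_rcons; apply: IH => //.
- rewrite (step w j i o) //; apply/andP; split; lra.
- by rewrite step_same; apply/andP.
- rewrite (step w j o i) //; apply/andP; split; lra.
Qed.

Lemma approx (s d : R) : 0 <= s <= 1 -> 0 < d ->
  exists n k, (k <= 2 ^ n)%N /\ `|s - k%:R / 2 ^+ n| < d.
Proof.
move=> /andP[s0 s1] d0; have [n hn] := @small_h R 1 d d0.
have hp : (0 : R) < 2 ^+ n by rewrite exprn_gt0.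
have s2 : 0 <= s * 2 ^+ n by apply: mulr_ge0 => //; apply: ltW.
have /andP[k1 k2] := truncn_itv s2.
exists n, (Num.truncn (s * 2 ^+ n)); split.
  rewrite -(ler_nat R) natrX. apply: le_trans k1 _. 
  by rewrite ler_piMl // ltW.
set k := Num.truncn _ in k1 k2 *.
have -> : s - k%:R / 2 ^+ n = (s * 2 ^+ n - k%:R) / 2 ^+ n by field; rewrite gt_eqF.
rewrite ger0_norm; last by apply: divr_ge0; [lra| apply: ltW].
apply: le_lt_trans hn; rewrite ler_pM2r ?invr_gt0 //; lra.
Qed.

Lemma FM1 l y : (FM l y).1 - (P l).1 = (y.1 - (P l).1) / 2.
Proof. by rewrite /Fmap /=; field. Qed.
Lemma FM2 l y : (FM l y).2 - (P l).2 = (y.2 - (P l).2) / 2.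
Proof. by rewrite /Fmap /=; field. Qed.

Lemma FW_lip w a b : `|(FW w a).1 - (FW w b).1| <= `|a.1 - b.1| /\
  `|(FW w a).2 - (FW w b).2| <= `|a.2 - b.2|.
Proof.
elim: w => [|l w [IH1 IH2]] /=; first by split.
have e1 : (FM l (FW w a)).1 - (FM l (FW w b)).1 = ((FW w a).1 - (FW w b).1) / 2.
  by rewrite /Fmap /=; field.
have e2 : (FM l (FW w a)).2 - (FM l (FW w b)).2 = ((FW w a).2 - (FW w b).2) / 2.
  by rewrite /Fmap /=; field.
have n2 : `|(2:R)^-1| = 2^-1 by rewrite ger0_norm // invr_ge0 ler0n.
rewrite e1 e2 !normrM n2.
have h1 := normr_ge0 ((FW w a).1 - (FW w b).1).
have h2 := normr_ge0 ((FW w a).2 - (FW w b).2).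
split; lra.
Qed.

Variable K : set (R * R).
Hypotheses (Kcl : closed K) (KF : forall l y, K y -> K (FM l y)).
Variable x0 : R * R.
Hypotheses (Kx0 : K x0) (Hc : {within K, continuous f}).

Lemma KFW w y : K y -> K (FW w y).
Proof. by move=> Ky; elim: w => //= l w IH; apply: KF. Qed.

Lemma iter_v l n : ((FW (nseq n l) x0).1 - (P l).1 = (x0.1 - (P l).1) / 2 ^+ n) /\
  ((FW (nseq n l) x0).2 - (P l).2 = (x0.2 - (P l).2) / 2 ^+ n).
Proof.
elim: n => [|n [IH1 IH2]]; first by rewrite expr0 !divr1.
rewrite /= FM1 FM2 IH1 IH2 exprS; split; field; by rewrite expf_neq0.
Qed.

Lemma Kvtx l : K (P l).
Proof.
apply: closed_eps => // e e0.
have [n hn] := @small_h R (`|x0.1 - (P l).1| + `|x0.2 - (P l).2|) e e0.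
exists (FW (nseq n l) x0); split; first exact: KFW.
have [h1 h2] := iter_v l n.
have hp : (0 : R) < 2 ^+ n by rewrite exprn_gt0.
have key (z : R) : `|z / 2 ^+ n| = `|z| / 2 ^+ n.
  by rewrite normrM normrV ?(ger0_norm (ltW hp)) // unitfE gt_eqF.
rewrite -opprB h1 normrN -[`|(P l).2 - _|]normrN opprB h2 !key.
rewrite mulrDl in hn.
have : 0 <= `|x0.1 - (P l).1| / 2 ^+ n by apply: divr_ge0 => //; apply: ltW.
have : 0 <= `|x0.2 - (P l).2| / 2 ^+ n by apply: divr_ge0 => //; apply: ltW.
split; lra.
Qed.

Lemma Kdy n : forall k, (k <= 2 ^ n)%N -> K (E (k%:R / 2 ^+ n)).
Proof.
elim: n => [|n IH] k hk.
  move: hk; rewrite expn0 expr0 divr1; case: k => [|[|//]] _.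
    by rewrite E0; apply: Kvtx.
  by rewrite E1; apply: Kvtx.
case: (dy_split _ _ hk) => [[hk' ->]|[k' [hk' ->]]].
  by rewrite -E_half; apply: KF; apply: IH.
by rewrite -E_half2; apply: KF; apply: IH.
Qed.

Definition Q := `|(P j).1 - (P i).1| + `|(P j).2 - (P i).2| + 1.
Lemma Q_gt0 : 0 < Q.
Proof. rewrite /Q; have := normr_ge0 ((P j).1 - (P i).1); have := normr_ge0 ((P j).2 - (P i).2); lra. Qed.

Lemma E_close (s s' e : R) : 0 < e -> `|s - s'| < e / Q ->
  `|(E s).1 - (E s').1| < e /\ `|(E s).2 - (E s').2| < e.
Proof.
move=> e0; rewrite ltr_pdivlMr ?Q_gt0 // /Q => h.
have -> : (E s).1 - (E s').1 = (s - s') * ((P j).1 - (P i).1) by rewrite /E /=; ring.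
have -> : (E s).2 - (E s').2 = (s - s') * ((P j).2 - (P i).2) by rewrite /E /=; ring.
rewrite !normrM.
have := normr_ge0 ((P j).1 - (P i).1); have := normr_ge0 ((P j).2 - (P i).2).
have := normr_ge0 (s - s').
move: h; set a := `|s - s'|; set b := `|(P j).1 - (P i).1|; set c := `|(P j).2 - (P i).2|.
move=> h h1 h2 h3; split; nra.
Qed.

Lemma KE s : 0 <= s <= 1 -> K (E s).
Proof.
move=> hs; apply: closed_eps => // e e0.
have eQ : 0 < e / Q by rewrite divr_gt0 ?Q_gt0.
have [n [k [hk hd]]] := approx s (e / Q) hs eQ.
exists (E (k%:R / 2 ^+ n)); split; first exact: Kdy.
exact: E_close.
Qed.

Lemma maxp_real w lo hi s : 0 <= s <= 1 ->
  lo <= vl w i <= hi -> lo <= vl w j <= hi -> lo <= vl w o <= hi ->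
  lo <= f (FW w (E s)) <= hi.
Proof.
move=> hs bi bj bo.
have Kx : K (FW w (E s)) by apply: KFW; apply: KE.
suff H : forall e, 0 < e -> lo <= f (FW w (E s)) + e /\ f (FW w (E s)) <= hi + e.
  apply/andP; split.
    rewrite -[f _]opprK lerNr; apply/ler_addgt0Pr => e e0.
    have [H1 _] := H e e0; lra.
  by apply/ler_addgt0Pr => e e0; have [_ H2] := H e e0.
move=> e e0.
have [d d0 Hd] := @cont_eps _ _ _ _ Hc Kx e e0.
have dQ : 0 < d / Q by rewrite divr_gt0 ?Q_gt0.
have [n [k [hk hd]]] := approx s (d / Q) hs dQ.
have [c1 c2] := E_close _ _ _ d0 hd.
have [l1 l2] := FW_lip w (E s) (E (k%:R / 2 ^+ n)).
have := Hd (FW w (E (k%:R / 2 ^+ n))).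
move=> /(_ (KFW w _ (Kdy n k hk))) /(_ (le_lt_trans l1 c1)) /(_ (le_lt_trans l2 c2)).
rewrite ltr_norml => /andP[h1 h2].
have /andP[m1 m2] := maxp_dy n k w lo hi hk bi bj bo.
split; lra.
Qed.

Definition a0 := vl [::] i.
Definition A n := vl (nseq n i) o.
Definition B n := vl (nseq n i) j.

Lemma nseq_rcons n : nseq n.+1 i = rcons (nseq n i) i.
Proof. by elim: n => //= n <-. Qed.

Lemma vl_i n : vl (nseq n i) i = a0.
Proof. by elim: n => // n IH; rewrite nseq_rcons step_same. Qed.

Lemma recA n : A n.+1 = (2 * A n + 2 * a0 + B n) / 5.
Proof.
rewrite /A nseq_rcons (step _ i o j) ?vl_i //; by rewrite eq_sym.
Qed.

Lemma recB n : B n.+1 = (2 * B n + 2 * a0 + A n) / 5.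
Proof.
rewrite /B nseq_rcons (step _ i j o) ?vl_i //; by rewrite eq_sym.
Qed.

Lemma sumAB n : A n + B n - 2 * a0 = (A 0 + B 0 - 2 * a0) * (3 / 5) ^+ n.
Proof.
elim: n => [|n IH]; first by rewrite expr0 mulr1.
rewrite recA recB exprS mulrA [_ * (3/5)]mulrC -mulrA -IH; by field.
Qed.

Lemma difAB n : A n - B n = (A 0 - B 0) * (1 / 5) ^+ n.
Proof.
elim: n => [|n IH]; first by rewrite expr0 mulr1.
rewrite recA recB exprS mulrA [_ * (1/5)]mulrC -mulrA -IH; by field.
Qed.

Lemma FW_nseq n s : FW (nseq n i) (E s) = E (s / 2 ^+ n).
Proof.
elim: n => [|n IH]; first by rewrite expr0 divr1.
rewrite /= IH E_half exprS; congr E; field; by rewrite expf_neq0.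
Qed.

Lemma region n t lo hi : (2 ^+ n.+1)^-1 <= t <= (2 ^+ n)^-1 ->
  lo <= (2 * a0 + 2 * B n + A n) / 5 <= hi -> lo <= B n <= hi ->
  lo <= (2 * A n + 2 * B n + a0) / 5 <= hi ->
  lo <= f (E t) <= hi.
Proof.
move=> /andP[t1 t2] h1 h2 h3.
have hp : (0 : R) < 2 ^+ n by rewrite exprn_gt0.
have hp1 : (0 : R) < 2 ^+ n.+1 by rewrite exprn_gt0.
set s := t * 2 ^+ n.+1 - 1.
have -> : E t = FW (rcons (nseq n i) j) (E s).
  rewrite FW_rcons E_half2 FW_nseq; congr E; rewrite /s exprS; field.
  by rewrite expf_neq0.
apply: maxp_real.
- have e : t * 2 ^+ n.+1 = 2 * (t * 2 ^+ n) by rewrite exprS; ring.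
  have u1 : 1 <= t * 2 ^+ n.+1 by rewrite -ler_pdivrMr // mul1r.
  have u2 : t * 2 ^+ n <= 1 by rewrite -ler_pdivlMr // mul1r.
  rewrite /s; apply/andP; split; lra.
- by rewrite (step _ j i o) // vl_i.
- by rewrite step_same.
- rewrite (step _ j o i) ?vl_i //; by rewrite eq_sym.
Qed.

Definition S0 := A 0 + B 0 - 2 * a0.
Definition D0 := A 0 - B 0.

Lemma region_bd n t : (2 ^+ n.+1)^-1 < t <= (2 ^+ n)^-1 ->
  `|f (E t) - a0 - 3 / 10 * S0 * (3 / 5) ^+ n| <=
    1 / 5 * (`|S0| * (3 / 5) ^+ n) + `|D0| * (1 / 5) ^+ n.
Proof.
move=> /andP[t1 t2].
have hs := sumAB n; have hd := difAB n; rewrite -/S0 in hs; rewrite -/D0 in hd.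
rewrite -[3 / 10 * S0 * _]mulrA.
set r := (3 / 5 : R) ^+ n in hs *; set q := (1 / 5 : R) ^+ n in hd *.
have r0 : 0 <= r by apply: exprn_ge0; lra.
have q0 : 0 <= q by apply: exprn_ge0; lra.
have sr1 : S0 * r <= `|S0| * r by apply: ler_wpM2r => //; apply: ler_norm.
have sr2 : - (`|S0| * r) <= S0 * r.
  rewrite -mulNr; apply: ler_wpM2r => //; rewrite lerNl -normrN; apply: ler_norm.
have dq1 : D0 * q <= `|D0| * q by apply: ler_wpM2r => //; apply: ler_norm.
have dq2 : - (`|D0| * q) <= D0 * q.
  rewrite -mulNr; apply: ler_wpM2r => //; rewrite lerNl -normrN; apply: ler_norm.
have := normr_ge0 S0; have := normr_ge0 D0.
move: sr1 sr2 dq1 dq2 hs hd.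
set u := S0 * r; set v := `|S0| * r; set x := D0 * q; set y := `|D0| * q.
move=> sr1 sr2 dq1 dq2 hs hd nD nS.
have hv : 0 <= v by rewrite /v mulr_ge0.
have hy : 0 <= y by rewrite /y mulr_ge0.
rewrite ler_norml.
have H := region n t (a0 + 3 / 10 * u - (1 / 5 * v + y))
                      (a0 + 3 / 10 * u + (1 / 5 * v + y)).
have /andP[h1 h2] : a0 + 3 / 10 * u - (1 / 5 * v + y) <= f (E t) <=
                    a0 + 3 / 10 * u + (1 / 5 * v + y).
  apply: H; [apply/andP; split => //; exact: ltW|
             apply/andP; split; lra ..].
apply/andP; split; lra.
Qed.

Lemma core0 : S0 = 0 -> forall t, 0 < t <= 1 ->
  `|f (E t) - a0| <= 4 * `|D0| * t ^+ 2.
Proof.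
move=> hS; apply: (@corner_zero R (fun t => f (E t) - a0)) => // n t ht.
by have := region_bd n t ht; rewrite hS normr0 !mulr0 !mul0r subr0 mulr0 add0r.
Qed.

Lemma coreP : 0 < S0 -> forall M, exists2 d, 0 < d &
  forall t, 0 < t < d -> M * t < f (E t) - a0.
Proof.
move=> hS; apply: (@corner_inf R (fun t => f (E t) - a0) S0 D0) => // n t ht.
have := region_bd n t ht; rewrite ler_norml (gtr0_norm hS) => /andP[h1 h2].
lra.
Qed.

Lemma coreN : S0 < 0 -> forall M, exists2 d, 0 < d &
  forall t, 0 < t < d -> M * t < - (f (E t) - a0).
Proof.
move=> hS; apply: (@corner_inf R (fun t => - (f (E t) - a0)) (- S0) D0);
  first by rewrite oppr_gt0.
move=> n t ht.
have := region_bd n t ht; rewrite ler_norml (ltr0_norm hS) => /andP[h1 h2].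
lra.
Qed.
End Core.

Theorem lemma5 (R : realType) (p0 p1 p2 : R * R) (K : set (R * R))
  (f : R * R -> R) (alpha beta gamma : R) :
  unit_equilateral p0 p1 p2 ->
  is_attractor p0 p1 p2 K ->
  sg_harmonic p0 p1 p2 K f ->
  f p0 = alpha -> f p1 = beta -> f p2 = gamma ->
  let g := fun t : R => f (edge12 p1 p2 t) in
  (2 * beta = alpha + gamma ->
     (fun t => (g t - g 0) / t) @ 0^'+ --> 0) /\
  (2 * beta != alpha + gamma ->
     (fun t => (g t - g 0) / t) @ 0^'+ --> +oo \/
     (fun t => (g t - g 0) / t) @ 0^'+ --> -oo) /\
  (2 * gamma = alpha + beta ->
     (fun t => (g t - g 1) / (t - 1)) @ 1^'- --> 0) /\
  (2 * gamma != alpha + beta ->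
     (fun t => (g t - g 1) / (t - 1)) @ 1^'- --> +oo \/
     (fun t => (g t - g 1) / (t - 1)) @ 1^'- --> -oo).
Proof.
move=> _ [cK [[x0 Kx0] Keq]] [Hc Hh0] <- <- <- g.
have Kcl : closed K by apply: compact_closed => //; exact: norm_hausdorff.
have KF : forall l y, K y -> K (Fmap p0 p1 p2 l y).
  by move=> l y Ky; rewrite Keq; exists l => //; exists y.
have Hh : forall w u v x, u != v -> v != x -> u != x -> _ :=
  fun w => Hh0 (size w) w erefl.
pose i0 := @Ordinal 3 0 isT; pose i1 := @Ordinal 3 1 isT; pose i2 := @Ordinal 3 2 isT.
have g0 : g 0 = f p1.
  by rewrite /g /edge12 !mul0r !addr0 -surjective_pairing.
have g1 : g 1 = f p2.
  rewrite /g /edge12; congr f; rewrite [p2 in RHS]surjective_pairing; congr pair; ring.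
have gE : forall t, g t = f (E R p0 p1 p2 i2 i1 (1 - t)).
  move=> t; rewrite /g /edge12 /E /=; congr f; congr pair; ring.
have S01 : S0 R p0 p1 p2 f i1 i2 i0 = f p0 + f p2 - 2 * f p1 by [].
have S02 : S0 R p0 p1 p2 f i2 i1 i0 = f p0 + f p1 - 2 * f p2 by [].
rewrite g0 g1.
have F1 : (fun t => (g t - f p1) / t) = (fun t => (f (E R p0 p1 p2 i1 i2 t) - a0 R p0 p1 p2 f i1) / t) by [].
have F2 : (fun t => (g t - f p2) / (t - 1)) =
   (fun t => (fun s => f (E R p0 p1 p2 i2 i1 s) - a0 R p0 p1 p2 f i2) (1 - t) / (t - 1)).
  by apply: funext => t; rewrite gE.
rewrite F1 F2.
split; [|split; [|split]].
- move=> h; apply: F0 => t ht.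
  apply: (@core0 _ _ _ _ _ Hh i1 i2 i0 isT isT isT _ Kcl KF _ Kx0 Hc) => //; rewrite S01; lra.
- move=> h; case: (ltgtP (S0 R p0 p1 p2 f i1 i2 i0) 0) => hs.
  + right; apply: Fn; exact: (@coreN _ _ _ _ _ Hh i1 i2 i0 isT isT isT _ Kcl KF _ Kx0 Hc hs).
  + left; apply: Fp; exact: (@coreP _ _ _ _ _ Hh i1 i2 i0 isT isT isT _ Kcl KF _ Kx0 Hc hs).
  + rewrite S01 in hs; move: h; have -> : 2 * f p1 = f p0 + f p2 by lra.
    by rewrite eqxx.
- move=> h; apply: (@G0 R (fun s => f (E R p0 p1 p2 i2 i1 s) - a0 R p0 p1 p2 f i2)
    (4 * `|D0 R p0 p1 p2 f i2 i1 i0|)) => t ht.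
  apply: (@core0 _ _ _ _ _ Hh i2 i1 i0 isT isT isT _ Kcl KF _ Kx0 Hc) => //; rewrite S02; lra.
- move=> h; case: (ltgtP (S0 R p0 p1 p2 f i2 i1 i0) 0) => hs.
  + left; apply: (@Gn R (fun s => f (E R p0 p1 p2 i2 i1 s) - a0 R p0 p1 p2 f i2)); exact: (@coreN _ _ _ _ _ Hh i2 i1 i0 isT isT isT _ Kcl KF _ Kx0 Hc hs).
  + right; apply: (@Gp R (fun s => f (E R p0 p1 p2 i2 i1 s) - a0 R p0 p1 p2 f i2)); exact: (@coreP _ _ _ _ _ Hh i2 i1 i0 isT isT isT _ Kcl KF _ Kx0 Hc hs).
  + rewrite S02 in hs; move: h; have -> : 2 * f p2 = f p0 + f p1 by lra.
    by rewrite eqxx.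
Qed.
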